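(* Let $K$ be a field and $I\subset R=K[x_1,\ldots,x_n]$ a monomial ideal. Then: (i) for any ordered $n$-tuple $(i_1,\ldots,i_n)$ of positive integers, $I$ has the nearly copersistence property if and only if its expansion $I^*\subseteq R^*$ with respect to $(i_1,\ldots,i_n)$ has the nearly copersistence property; (ii) for any weight $W$ over $R$, $I$ has the nearly copersistence property if and only if the weighted ideal $I_W$ has the nearly copersistence property.
   Context: A monomial ideal $I$ in a polynomial ring $S$ over $K$ has the nearly copersistence property if there exist a positive integer $s$ and a monomial prime ideal $\mathfrak{p}$ of $S$ such that $\mathrm{Ass}_S(S/I^m)\cup\{\mathfrak{p}\}\supseteq\mathrm{Ass}_S(S/I^{m+1})$ for all $1\le m\le s$, and $\mathrm{Ass}_S(S/I^m)\supseteq\mathrm{Ass}_S(S/I^{m+1})$ for all $m\ge s+1$. Expansion: $R^*=K[x_{11},\ldots,x_{1i_1},\ldots,x_{n1},\ldots,x_{ni_n}]$ and $\mathfrak{p}_j=(x_{j1},\ldots,x_{ji_j})\subseteq R^*$; if $I$ has minimal monomial generators $x_1^{a_k(1)}\cdots x_n^{a_k(n)}$, $k=1,\ldots,m$, then $I^*=\sum_{k=1}^m\mathfrak{p}_1^{a_k(1)}\cdots\mathfrak{p}_n^{a_k(n)}$. Weighting: a weight is a function $W:\{x_1,\ldots,x_n\}\to\mathbb{N}$ (positive integers), $w_i=W(x_i)$; $I_W$ is generated by $h(u)$ for $u$ ranging over the minimal monomial generators of $I$, where $h:R\to R$ is the $K$-algebra homomorphism $h(x_i)=x_i^{w_i}$.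 *)

(* Defs.v *)
From HB Require Import structures.
From mathcomp Require Import all_boot all_algebra.
From mathcomp Require Import mpoly.
Set Implicit Arguments. Unset Strict Implicit. Unset Printing Implicit Defensive.
Import GRing.Theory.
Local Open Scope ring_scope.

Section Ideals.
Variable R : comRingType.

Definition gen (S : R -> Prop) : R -> Prop :=
  fun f => exists s : seq (R * R),
    (forall q, q \in s -> S q.2) /\ f = \sum_(q <- s) q.1 * q.2.

Definition is_ideal (P : R -> Prop) : Prop :=
  [/\ P 0, (forall a b, P a -> P b -> P (a + b)) & (forall r a, P a -> P (r * a))].

Definition same_ideal (P Q : R -> Prop) : Prop := forall g, P g <-> Q g.

Definition ideal_mul (I J : R -> Prop) : R -> Prop :=
  gen (fun f => exists a b, [/\ I a, J b & f = a * b]).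

Fixpoint ideal_pow (I : R -> Prop) (k : nat) : R -> Prop :=
  match k with
  | 0 => fun _ => True
  | k'.+1 => ideal_mul (ideal_pow I k') I
  end.

Definition colon (J : R -> Prop) (f : R) : R -> Prop := fun g => J (g * f).

Definition prime_ideal (P : R -> Prop) : Prop :=
  [/\ is_ideal P, ~ P 1 & forall a b, P (a * b) -> P a \/ P b].

(* P \in Ass_R(R/J) : P is a prime ideal of the form J : f *)
Definition ass (J P : R -> Prop) : Prop :=
  prime_ideal P /\ exists f : R, same_ideal P (colon J f).

End Ideals.

Section Monomial.
Variables (K : fieldType) (n : nat).

Definition monomial_prime (P : {mpoly K[n]} -> Prop) : Prop :=
  exists A : {set 'I_n},
    same_ideal P (gen (fun f => exists2 i, i \in A & f = 'X_i)).

Definition is_monomial_ideal (I : {mpoly K[n]} -> Prop) : Prop :=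
  exists S : 'X_{1..n} -> Prop,
    same_ideal I (gen (fun f => exists2 m, S m & f = 'X_[m])).

Definition mingen (I : {mpoly K[n]} -> Prop) (m : 'X_{1..n}) : Prop :=
  I 'X_[m] /\
  forall m' : 'X_{1..n}, I 'X_[m'] -> (forall i, m' i <= m i)%N -> m' = m.

Definition nearly_copersistent (I : {mpoly K[n]} -> Prop) : Prop :=
  exists s : nat, (0 < s)%N /\
  exists P, monomial_prime P /\
    (forall m : nat, (1 <= m <= s)%N -> forall Q,
        ass (ideal_pow I m.+1) Q -> ass (ideal_pow I m) Q \/ same_ideal Q P) /\
    (forall m : nat, (s.+1 <= m)%N -> forall Q,
        ass (ideal_pow I m.+1) Q -> ass (ideal_pow I m) Q).

(* R^* has N = i_1 + ... + i_n variables; the variables of block j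
   (x_{j1},...,x_{j i_j}) are those with index v in
   [i_1+...+i_{j-1}, i_1+...+i_j). *)
Definition expN (i : 'I_n -> nat) : nat := (\sum_(j < n) i j)%N.

Definition exp_prime (i : 'I_n -> nat) (j : 'I_n) : {mpoly K[expN i]} -> Prop :=
  gen (fun f => exists2 v : 'I_(expN i),
         (\sum_(l < n | (l < j)%N) i l <= v < \sum_(l < n | (l <= j)%N) i l)%N
         & f = 'X_v).

Definition exp_monideal (i : 'I_n -> nat) (a : 'X_{1..n}) : {mpoly K[expN i]} -> Prop :=
  foldr (@ideal_mul _) (fun _ => True)
        [seq ideal_pow (@exp_prime i j) (a j) | j <- enum 'I_n].

Definition expansion (i : 'I_n -> nat) (I : {mpoly K[n]} -> Prop)
  : {mpoly K[expN i]} -> Prop :=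
  gen (fun f => exists2 u, mingen I u & @exp_monideal i u f).

Definition wmon (w : 'I_n -> nat) (u : 'X_{1..n}) : 'X_{1..n} :=
  [multinom (w j * u j)%N | j < n].

Definition weighted (w : 'I_n -> nat) (I : {mpoly K[n]} -> Prop)
  : {mpoly K[n]} -> Prop :=
  gen (fun f => exists2 u, mingen I u & f = 'X_[wmon w u]).

End Monomial.

Arguments exp_prime {K n} i j.
Arguments exp_monideal {K n} i a.
Arguments expansion {K n} i I.
Arguments weighted {K n} w I.
Arguments nearly_copersistent {K n} I.
Arguments mingen {K n} I m.

(* Main.v *)
Require Import Defs.
From HB Require Import structures.
From mathcomp Require Import all_boot all_algebra.
From mathcomp Require Import mpoly.
From Stdlib Require Import Classical ClassicalEpsilon.
From mathcomp Require Import ring zify.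
Set Implicit Arguments. Unset Strict Implicit. Unset Printing Implicit Defensive.
Import GRing.Theory.

Section GenR.
Local Open Scope ring_scope.
Variable R : comRingType.
Implicit Types (S T P Q J : R -> Prop).

Lemma gen_ideal S : is_ideal (gen S).
Proof.
split.
- by exists [::]; split => //; rewrite big_nil.
- move=> a b [s [Hs ->]] [t [Ht ->]]; exists (s ++ t); split; last by rewrite big_cat.
  by move=> q; rewrite mem_cat => /orP [] H; [apply: Hs H|apply: Ht H].
- move=> r a [s [Hs ->]]; exists [seq (r * q.1, q.2) | q <- s]; split.
    by move=> q /mapP [q' Hq' ->]; exact: Hs Hq'.
  by rewrite big_map mulr_sumr; apply: eq_bigr => q _; rewrite mulrA.
Qed.

Lemma gen_sub S x : S x -> gen S x.
Proof. by move=> Sx; exists [:: (1, x)]; split; [move=> q; rewrite inE => /eqP -> | rewrite big_seq1 mul1r]. Qed.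

Lemma ideal_sum P (I : eqType) (s : seq I) (F : I -> R) :
  is_ideal P -> (forall q, q \in s -> P (F q)) -> P (\sum_(q <- s) F q).
Proof.
case=> P0 PD _; elim: s => [|a s IH] H; first by rewrite big_nil.
rewrite big_cons; apply: PD; first by apply: H; rewrite inE eqxx.
by apply: IH => q qs; apply: H; rewrite inE qs orbT.
Qed.

Lemma gen_min S P : is_ideal P -> (forall x, S x -> P x) -> forall x, gen S x -> P x.
Proof.
move=> HP HS x [s [Hs ->]]; apply: ideal_sum => // q qs.
by case: HP => _ _ HM; apply: HM; apply: HS; apply: Hs.
Qed.

Lemma gen_mono S T x : (forall y, S y -> gen T y) -> gen S x -> gen T x.
Proof. by move=> H; apply: gen_min => //; apply: gen_ideal. Qed.

Lemma id_D P a b : is_ideal P -> P a -> P b -> P (a + b).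
Proof. by case=> _ H _; apply: H. Qed.
Lemma id_M P r a : is_ideal P -> P a -> P (r * a).
Proof. by case=> _ _ H; apply: H. Qed.
Lemma id_Mr P r a : is_ideal P -> P a -> P (a * r).
Proof. by move=> HP Pa; rewrite mulrC; apply: id_M. Qed.
Lemma id_0 P : is_ideal P -> P 0.
Proof. by case. Qed.
Lemma id_N P a : is_ideal P -> P a -> P (- a).
Proof. by move=> HP Pa; rewrite -mulN1r; apply: id_M. Qed.
Lemma id_B P a b : is_ideal P -> P a -> P b -> P (a - b).
Proof. by move=> HP Pa Pb; apply: id_D => //; apply: id_N. Qed.

Lemma same_sym P Q : same_ideal P Q -> same_ideal Q P.
Proof. by move=> H g; split => /H. Qed.
Lemma same_trans P Q T : same_ideal P Q -> same_ideal Q T -> same_ideal P T.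
Proof. by move=> H1 H2 g; split => [/H1/H2|/H2/H1]. Qed.

Lemma ideal_ext P Q : same_ideal P Q -> is_ideal P -> is_ideal Q.
Proof.
move=> E [H0 HD HM]; split; first by apply/E.
- by move=> a b /E Pa /E Pb; apply/E; apply: HD.
- by move=> r a /E Pa; apply/E; apply: HM.
Qed.

Lemma gen_ext S T : (forall x, S x <-> T x) -> same_ideal (gen S) (gen T).
Proof. by move=> E g; split; apply: gen_mono => y /E; apply: gen_sub. Qed.

Lemma ideal_mul_ext J1 J2 J1' J2' : same_ideal J1 J1' -> same_ideal J2 J2' ->
  same_ideal (ideal_mul J1 J2) (ideal_mul J1' J2').
Proof.
move=> E1 E2; apply: gen_ext => x; split => [[a [b [/E1 ? /E2 ? ->]]]|[a [b [/E1 ? /E2 ? ->]]]];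
  by exists a, b.
Qed.

Lemma ideal_pow_ext J J' m : same_ideal J J' -> same_ideal (ideal_pow J m) (ideal_pow J' m).
Proof. by move=> E; elim: m => [|m IH] //=; apply: ideal_mul_ext. Qed.

Lemma prime_ext P Q : same_ideal P Q -> prime_ideal P -> prime_ideal Q.
Proof.
move=> E [HI H1 HM]; split; first exact: ideal_ext HI.
  by move/E.
by move=> a b /E /HM [] /E; [left|right].
Qed.

Lemma ass_ext J J' Q : same_ideal J J' -> ass J Q -> ass J' Q.
Proof.
move=> E [HP [f Hf]]; split => //; exists f => g; split => [/Hf /E|/E /Hf] //.
Qed.

Lemma ass_extQ J Q Q' : same_ideal Q Q' -> ass J Q -> ass J Q'.
Proof.
move=> E [HP [f Hf]]; split; first exact: prime_ext HP.
by exists f; apply: same_trans Hf; apply: same_sym.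
Qed.

End GenR.

Section Mon.
Local Open Scope ring_scope.
Variables (K : fieldType) (n : nat).
Local Notation R := {mpoly K[n]}.
Local Notation M := 'X_{1..n}.
Implicit Types (S T : M -> Prop) (J P Q : R -> Prop).

Definition mideal S : R -> Prop := gen (fun f => exists2 m, S m & f = 'X_[m]).
Definition upS S (m : M) := exists2 s, S s & (s <= m)%MM.

Lemma lepm_addl (s m1 m2 : M) : (s <= m2)%MM -> (s <= m1 + m2)%MM.
Proof.
move/mnm_lepP => H; apply/mnm_lepP => i; rewrite mnmDE.
exact: leq_trans (H i) (leq_addl _ _).
Qed.
Lemma lepm_add (a b c d : M) : (a <= c)%MM -> (b <= d)%MM -> (a + b <= c + d)%MM.
Proof.
move/mnm_lepP => H1 /mnm_lepP H2; apply/mnm_lepP => i; rewrite !mnmDE.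
exact: leq_add.
Qed.
Lemma lepm_addr (m1 m2 : M) : (m1 <= m1 + m2)%MM.
Proof. by apply/mnm_lepP => i; rewrite mnmDE leq_addr. Qed.

Lemma mideal_ideal S : is_ideal (mideal S).
Proof. exact: gen_ideal. Qed.

Lemma mdivX (s m : M) : (s <= m)%MM -> 'X_[m] = 'X_[m - s] * 'X_[s] :> R.
Proof. by move=> H; rewrite -mpolyXD submK. Qed.

Lemma midealP S f : mideal S f <-> (forall m, m \in msupp f -> upS S m).
Proof.
split.
- move=> Hf; apply: (gen_min (P := fun f => forall m, m \in msupp f -> upS S m)) Hf; last first.
    by move=> x [m Sm ->] m'; rewrite msuppX inE => /eqP ->; exists m => //; apply: lepm_refl.
  split.
  + by move=> m; rewrite msupp0.
  + by move=> a b Ha Hb m /msuppD_le; rewrite mem_cat => /orP [/Ha|/Hb].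
  + move=> r a Ha m /msuppM_le /allpairsP [[m1 m2] [_ /Ha [s Ss le] /= ->]].
    by exists s => //; apply: lepm_addl.
- move=> H; rewrite (mpolyE f); apply: ideal_sum; first exact: gen_ideal.
  move=> m /H [s Ss le]; rewrite -mul_mpolyC (mdivX le) mulrA.
  by apply: id_M; first exact: gen_ideal; apply: gen_sub; exists s.
Qed.

Lemma midealX S m : mideal S 'X_[m] <-> upS S m.
Proof.
rewrite midealP; split; first by apply; rewrite msuppX inE.
by move=> H m'; rewrite msuppX inE => /eqP ->.
Qed.

Definition mon J := same_ideal J (mideal (fun m => J 'X_[m])).

Lemma mon_ideal J : mon J -> is_ideal J.
Proof. by move=> E; apply: ideal_ext (mideal_ideal _); apply: same_sym. Qed.

Lemma monP J : is_monomial_ideal J -> mon J.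
Proof.
case=> S E g; split => [/E|].
  apply: gen_mono => y [m Sm ->]; apply: gen_sub; exists m => //.
  by apply/E; apply: gen_sub; exists m.
move=> H; apply/E; move: H; apply: gen_mono => y [m Jm ->].
by apply/midealX; apply/midealX; apply/E.
Qed.

Lemma mon_is J : mon J -> is_monomial_ideal J.
Proof. by move=> E; exists (fun m => J 'X_[m]). Qed.

Lemma monX J m : mon J -> J 'X_[m] <-> upS (fun m => J 'X_[m]) m.
Proof. by move=> E; rewrite -midealX; split => /E. Qed.

Lemma mon_up J (a b : M) : mon J -> J 'X_[a] -> (a <= b)%MM -> J 'X_[b].
Proof. by move=> E Ja le; apply/(monX _ E); exists a. Qed.

Lemma mon_supp J f : mon J -> J f <-> (forall m, m \in msupp f -> J 'X_[m]).
Proof.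
move=> E; split => [/E /midealP H m /H [s Js le]|H].
  by apply: mon_up Js le.
by apply/E/midealP => m /H Jm; exists m => //; apply: lepm_refl.
Qed.

Definition msum S T (c : M) := exists a b, [/\ S a, T b & c = (a + b)%MM].

Lemma mul_mideal S T : same_ideal (ideal_mul (mideal S) (mideal T)) (mideal (msum S T)).
Proof.
move=> g; split.
- apply: gen_min; first exact: gen_ideal.
  move=> x [a [b [/midealP Ha /midealP Hb ->]]]; apply/midealP => m.
  move/msuppM_le /allpairsP => [[m1 m2] [/Ha [s Ss le1] /Hb [t Tt le2] /= ->]].
  by exists (s + t)%MM; [exists s, t | apply: lepm_add].
- apply: gen_mono => y [m [a [b [Sa Tb ->]]] ->]; apply: gen_sub.
  exists 'X_[a], 'X_[b]; split; last exact: mpolyXD.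
  + by apply: gen_sub; exists a.
  + by apply: gen_sub; exists b.
Qed.

Lemma mon_mul J1 J2 : mon J1 -> mon J2 ->
  mon (ideal_mul J1 J2) /\
  forall c, ideal_mul J1 J2 'X_[c] <->
    exists a b, [/\ J1 'X_[a], J2 'X_[b] & (a + b <= c)%MM].
Proof.
move=> E1 E2.
have E := same_trans (ideal_mul_ext E1 E2) (mul_mideal _ _).
have HX c : ideal_mul J1 J2 'X_[c] <->
    exists a b, [/\ J1 'X_[a], J2 'X_[b] & (a + b <= c)%MM].
  rewrite (E ('X_[c])) midealX; split.
    by case=> _ [a [b [Ja Jb ->]]] le; exists a, b.
  by case=> a [b [Ja Jb le]]; exists (a + b)%MM => //; exists a, b.
split => //.
move=> g; split => [/E|H].
  apply: gen_mono => y [m [a [b [Ja Jb ->]]] ->]; apply: gen_sub.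
  by exists (a + b)%MM => //; apply/HX; exists a, b; split => //; apply: lepm_refl.
apply/E; move: H; apply: gen_mono => y [m Jm ->].
by apply/midealX; move/HX: Jm => [a [b [Ja Jb le]]]; exists (a + b)%MM => //; exists a, b.
Qed.

Lemma mon_true : mon (fun _ : R => True).
Proof.
move=> g; split => // _; rewrite -[g]mulr1 -mpolyX0.
by apply: id_M; first exact: gen_ideal; apply: gen_sub; exists 0%MM.
Qed.

Lemma mon_pow J m : mon J -> mon (ideal_pow J m).
Proof.
move=> E; elim: m => [|m IH] /=; first exact: mon_true.
by case: (mon_mul IH E).
Qed.

Lemma mon_powX J m c : mon J -> ideal_pow J m.+1 'X_[c] <->
  exists a b, [/\ ideal_pow J m 'X_[a], J 'X_[b] & (a + b <= c)%MM].
Proof. by move=> E; case: (mon_mul (mon_pow m E) E) => _ H; apply: H. Qed.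

End Mon.

Section Ass.
Local Open Scope ring_scope.
Variables (K : fieldType) (n : nat).
Local Notation R := {mpoly K[n]}.
Local Notation M := 'X_{1..n}.
Implicit Types (S T : M -> Prop) (J P Q : R -> Prop).

Definition PA (A : {set 'I_n}) : R -> Prop := gen (fun f => exists2 i, i \in A & f = 'X_i).

Lemma PA_mideal A : same_ideal (PA A) (mideal (fun m => exists2 i, i \in A & m = U_(i)%MM)).
Proof.
apply: gen_ext => x; split; first by case=> i iA ->; exists U_(i)%MM => //; exists i.
by case=> m [i iA ->] ->; exists i.
Qed.

Lemma PAP A f : PA A f <-> (forall m, m \in msupp f -> exists2 i, i \in A & (0 < m i)%N).
Proof.
rewrite (PA_mideal A f) midealP; split => H m /H.
  case=> s [i iA ->] /mnm_lepP le; exists i => //; move: (le i); rewrite mnm1E eqxx //.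
case=> i iA lt; exists U_(i)%MM; first by exists i.
by apply/mnm_lepP => j; rewrite mnm1E; case: eqP => [<-|].
Qed.

Lemma PA_X A m : PA A 'X_[m] <-> exists2 i, i \in A & (0 < m i)%N.
Proof.
rewrite PAP; split; first by apply; rewrite msuppX inE.
by move=> H m'; rewrite msuppX inE => /eqP ->.
Qed.

Definition mres (p : pred M) (f : R) : R := \sum_(m <- msupp f | p m) f@_m *: 'X_[m].

Lemma mresE p f k : (mres p f)@_k = if p k then f@_k else 0.
Proof.
rewrite /mres raddf_sum /= big_mkcond /=.
have E m : (if p m then (f@_m *: 'X_[m])@_k else 0) = if p m then f@_m * (m == k)%:R else 0.
  by case: (p m); rewrite ?mcoeffZ ?mcoeffX ?mcoeff0.
under eq_bigr => m _ do rewrite E.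
case: (boolP (k \in msupp f)) => kin.
  rewrite (bigD1_seq k) //= ?msupp_uniq // eqxx mulr1 big1 ?addr0 //.
  by move=> m /negPf mk; rewrite mk mulr0; case: (p m).
rewrite big1_seq; first by move/memN_msupp_eq0: kin => ->; case: (p k).
move=> m min; case: eqP => [e|]; first by move: min; rewrite e (negPf kin).
by rewrite mulr0; case: (p m).
Qed.

Definition perpA (A : {set 'I_n}) : pred M := fun m => [forall i in A, m i == 0%N].

Lemma PA_res A a : PA A (a - mres (perpA A) a).
Proof.
apply/PAP => m; rewrite mcoeff_msupp mcoeffB mresE.
case: (boolP (perpA A m)) => H; first by rewrite subrr eqxx.
move=> _; move: H; rewrite /perpA negb_forall_in => /existsP [i /andP [iA mi]].
by exists i => //; rewrite lt0n.
Qed.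

Lemma PA_res0 A a : PA A a <-> mres (perpA A) a = 0.
Proof.
rewrite PAP; split => [H|H m].
  apply/mpolyP => m; rewrite mresE mcoeff0.
  case: (boolP (perpA A m)) => // pm; apply/eqP; rewrite mcoeff_eq0; apply/negP => /H [i iA].
  by move/forallP: pm => /(_ i); rewrite iA /= => /eqP ->.
rewrite mcoeff_msupp => nz; move/mpolyP: H => /(_ m); rewrite mresE mcoeff0.
case: (boolP (perpA A m)) => [_ e|]; first by rewrite e eqxx in nz.
rewrite /perpA negb_forall_in => /existsP [i /andP [iA mi]] _.
by exists i => //; rewrite lt0n.
Qed.

Lemma PA_prime A : prime_ideal (PA A).
Proof.
split; first exact: gen_ideal.
  by rewrite -mpolyX0 PA_X => -[i _]; rewrite mnm0E.
move=> a b Hab; apply: NNPP => /not_or_and [Ha Hb].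
set a0 := mres (perpA A) a; set b0 := mres (perpA A) b.
have a0nz : a0 != 0 by apply/eqP => /PA_res0.
have b0nz : b0 != 0 by apply/eqP => /PA_res0.
have HI : is_ideal (PA A) by apply: gen_ideal.
have H0 : PA A (a0 * b0).
  have -> : a0 * b0 = a * b - ((a - a0) * b + a0 * (b - b0)) by ring.
  apply: (id_B HI) => //; apply: (id_D HI).
    by apply: (id_Mr _ HI); apply: PA_res.
  by apply: (id_M _ HI); apply: PA_res.
have pa : perpA A (mlead a0).
  move: (mlead_supp a0nz); rewrite mcoeff_msupp mresE.
  by case: (perpA A _) => //; rewrite eqxx.
have pb : perpA A (mlead b0).
  move: (mlead_supp b0nz); rewrite mcoeff_msupp mresE.
  by case: (perpA A _) => //; rewrite eqxx.
move/PAP: H0 => /(_ (mlead a0 + mlead b0)%MM).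
rewrite mcoeff_msupp mleadcM mulf_neq0 ?mleadc_eq0 // => /(_ isT) [i iA].
move/forallP: pa => /(_ i); move/forallP: pb => /(_ i).
by rewrite iA mnmDE /= => /eqP -> /eqP ->.
Qed.

End Ass.

Section AssThm.
Local Open Scope ring_scope.
Variables (K : fieldType) (n : nat).
Local Notation R := {mpoly K[n]}.
Local Notation M := 'X_{1..n}.
Implicit Types (S T : M -> Prop) (J P Q : R -> Prop).

Lemma colon_eq J f f' : is_ideal J -> J (f - f') -> same_ideal (colon J f) (colon J f').
Proof.
move=> HJ Jd g; rewrite /colon; split => H.
  have -> : g * f' = g * f - g * (f - f') by ring.
  by apply: id_B HJ H (id_M _ HJ Jd).
have -> : g * f = g * f' + g * (f - f') by ring.
by apply: id_D HJ H (id_M _ HJ Jd).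
Qed.

Lemma ex_pos (m : M) : m <> 0%MM -> exists i, (0 < m i)%N.
Proof.
move=> mnz; case: (boolP [exists i, 0 < m i]%N) => [/existsP [i H]|H]; first by exists i.
exfalso; apply: mnz; apply/mnmP => i; rewrite mnm0E.
by apply/eqP; rewrite -leqn0 leqNgt; apply: contra H => lt; apply/existsP; exists i.
Qed.

Lemma prime_X Q (m : M) : prime_ideal Q -> Q 'X_[m] -> exists i, (0 < m i)%N /\ Q 'X_i.
Proof.
case=> QI Q1 QP.
suff H : forall k (m : M), (mdeg m < k)%N -> Q 'X_[m] -> exists i, (0 < m i)%N /\ Q 'X_i.
  by apply: H (ltnSn _).
elim=> [|k IH] {}m // szm Qm.
have [m0|mnz] := eqVneq m 0%MM; first by rewrite m0 mpolyX0 in Qm.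
have [i mi] := ex_pos (elimN eqP mnz).
have le : (U_(i) <= m)%MM by apply/mnm_lepP => j; rewrite mnm1E; case: eqP => [<-|].
move: Qm; rewrite (mdivX K le) => /QP [Qm'|Qi]; last by exists i.
have: (mdeg (m - U_(i)) < k)%N.
  have := mdegD (m - U_(i)) U_(i); rewrite submK // mdeg1; lia.
move/IH => /(_ Qm') [j [mj Qj]]; exists j; split => //.
by move: mj; rewrite mnmBE; lia.
Qed.

Lemma ass_witness J Q f : mon J -> prime_ideal Q -> same_ideal Q (colon J f) ->
  exists c, same_ideal Q (colon J 'X_[c]).
Proof.
move=> EJ HQ; have HJ := mon_ideal EJ; case: (HQ) => [QI Q1 QP].
suff H : forall k f, (size (msupp f) < k)%N -> same_ideal Q (colon J f) ->
    exists c, same_ideal Q (colon J 'X_[c]).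
  by apply: H (ltnSn _).
elim=> [|k IH] {}f // szf Hf.
case: (classic (exists2 m, m \in msupp f & J 'X_[m])) => [[m mf Jm]|Ha].
  apply: (IH (f - f@_m *: 'X_[m])).
    have : (0 < size (msupp f))%N by case: (msupp f) mf.
    move=> sz0; rewrite (perm_size (msupp_rem f m)) size_rem //. by rewrite prednK.
  apply: same_trans Hf _; apply: colon_eq => //.
  have -> : f - (f - f@_m *: 'X_[m]) = (f@_m)%:MP * 'X_[m] by rewrite mul_mpolyC; ring.
  exact: id_M.
have fnz : f != 0.
  by apply/eqP => f0; apply: Q1; apply/Hf; rewrite /colon f0 mulr0; exact: id_0.
case: (classic (exists b, ~ Q 'X_[b] /\ exists2 a, a \in msupp f & J 'X_[b + a]))
  => [[b [Qb [a af Jba]]]|Hii].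
  set g := f * 'X_[b]; set m := (b + a)%MM.
  have mg : m \in msupp g by rewrite mcoeff_msupp /g /m mcoeffMX -mcoeff_msupp.
  have Hg : same_ideal Q (colon J g).
    move=> h; rewrite /colon /g; split => [Qh|Jh].
      have := id_Mr 'X_[b] QI Qh => /Hf; rewrite /colon.
      by have -> : h * (f * 'X_[b]) = h * 'X_[b] * f by ring.
    have : Q (h * 'X_[b]) by apply/Hf; rewrite /colon; move: Jh; have -> : h * (f * 'X_[b]) = h * 'X_[b] * f by ring.
    by case/QP.
  apply: (IH (g - g@_m *: 'X_[m])).
    rewrite (perm_size (msupp_rem g m)) size_rem // (perm_size (msuppMX f b)) size_map.
    have sz0 : (0 < size (msupp f))%N by case: (msupp f) af.
    by rewrite prednK.
  apply: same_trans Hg _; apply: colon_eq => //.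
  have -> : g - (g - g@_m *: 'X_[m]) = (g@_m)%:MP * 'X_[m] by rewrite mul_mpolyC; ring.
  exact: id_M.
have Hii' : forall b, ~ Q 'X_[b] -> forall a, a \in msupp f -> ~ J 'X_[b + a].
  by move=> b Qb a af Jba; apply: Hii; exists b; split => //; exists a.
set a0 := mlead f; have a0f := mlead_supp fnz.
have QX : forall b, Q 'X_[b] <-> J 'X_[b + a0].
  move=> b; split => [/Hf Jbf|J'].
    apply: ((mon_supp ('X_[b] * f) EJ).1 Jbf).
    by rewrite mulrC mcoeff_msupp mcoeffMX -mcoeff_msupp.
  by apply: NNPP => Qb; exact: Hii' Qb a0 a0f J'.
have Qsupp : forall g, Q g -> forall b, b \in msupp g -> Q 'X_[b].
  suff H : forall k g, (size (msupp g) < k)%N -> Q g -> forall b, b \in msupp g -> Q 'X_[b].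
    by move=> g; apply: H (ltnSn _).
  elim=> [|k' IH'] g // szg Qg b bg.
  have gnz : g != 0 by apply: contraTneq bg => ->; rewrite msupp0.
  set bl := mlead g.
  have Qbl : Q 'X_[bl].
    apply/QX; move/Hf: Qg => Jgf; apply: ((mon_supp (g * f) EJ).1 Jgf).
    by rewrite mcoeff_msupp mleadcM mulf_neq0 ?mleadc_eq0.
  case: (eqVneq b bl) => [-> //|ne].
  apply: (IH' (g - g@_bl *: 'X_[bl])).
  - rewrite (perm_size (msupp_rem g bl)) size_rem ?mlead_supp //.
    have sz0 : (0 < size (msupp g))%N by case: (msupp g) bg.
    by rewrite prednK.
  - by rewrite -mul_mpolyC; apply: id_B QI Qg (id_M _ QI Qbl).
  - by rewrite (perm_mem (msupp_rem g bl)) mem_rem_uniq ?msupp_uniq // inE ne bg.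
exists a0 => h; split.
  move=> Qh; apply/(mon_supp _ EJ) => m; rewrite (perm_mem (msuppMX h a0)).
  by case/mapP => b bh ->; rewrite addmC; apply/QX; exact: Qsupp Qh b bh.
move=> Jh; rewrite (mpolyE h); apply: (ideal_sum QI) => b bh.
rewrite -mul_mpolyC; apply: (id_M _ QI); apply/QX.
apply: ((mon_supp (h * 'X_[a0]) EJ).1 Jh).
by rewrite addmC (perm_mem (msuppMX h a0)); apply/mapP; exists b.
Qed.

End AssThm.

Section AssP.
Local Open Scope ring_scope.
Variables (K : fieldType) (n : nat).
Local Notation R := {mpoly K[n]}.
Local Notation M := 'X_{1..n}.
Implicit Types (S T : M -> Prop) (J P Q : R -> Prop).

Definition cpat J (c : M) (A : {set 'I_n}) :=
  [/\ ~ J 'X_[c], (forall i, i \in A -> J 'X_[c + U_(i)]) &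
      (forall d : M, (forall i, i \in A -> d i = 0%N) -> ~ J 'X_[c + d])].
Definition AP J A := exists c, cpat J c A.

Theorem assP J Q : mon J -> (ass J Q <-> exists A, AP J A /\ same_ideal Q (PA A)).
Proof.
move=> EJ; have HJ := mon_ideal EJ; split.
- case=> HQ [f Hf]; have [c Hc] := ass_witness EJ HQ Hf.
  case: (HQ) => QI Q1 QP.
  have QX b : Q 'X_[b] <-> J 'X_[b + c].
    by rewrite mpolyXD; split => [/Hc|H]; last apply/Hc.
  pose A := [set i : 'I_n | if excluded_middle_informative (Q 'X_i) then true else false].
  have inA i : i \in A <-> Q 'X_i.
    by rewrite inE; case: excluded_middle_informative.
  exists A; split.
    exists c; split.
    + by move=> Jc; apply: Q1; rewrite -mpolyX0; apply/QX; rewrite add0m.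
    + by move=> i /inA /QX; rewrite addmC.
    + move=> d Hd Jcd; have : Q 'X_[d] by apply/QX; rewrite addmC.
      case/(prime_X HQ) => i [di /inA /Hd]; lia.
  move=> g; split => [Qg|].
    apply/PAP => m mg; move/Hc: Qg => Jg.
    have : Q 'X_[m].
      apply/QX; apply: ((mon_supp (g * 'X_[c]) EJ).1 Jg).
      by rewrite (perm_mem (msuppMX g c)); apply/mapP; exists m => //; rewrite addmC.
    by case/(prime_X HQ) => i [mi /inA iA]; exists i.
  by apply: gen_min QI _ _ => x [i /inA Qi ->].
- case=> A [[c [Jc HA Hd]] E]; split.
    exact: prime_ext (same_sym E) (PA_prime K A).
  exists 'X_[c] => g; split => [/E /PAP Hg|Jg].
    apply/(mon_supp _ EJ) => m; rewrite (perm_mem (msuppMX g c)).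
    case/mapP => b /Hg [i iA bi] ->; apply: (mon_up EJ (HA i iA)).
    apply: lepm_add; first exact: lepm_refl.
    by apply/mnm_lepP => j; rewrite mnm1E; case: eqP => [<-|].
  apply/E/PAP => b bg.
  have Jcb : J 'X_[c + b].
    apply: ((mon_supp (g * 'X_[c]) EJ).1 Jg).
    by rewrite (perm_mem (msuppMX g c)); apply/mapP; exists b.
  apply: NNPP => H; apply: (Hd b) Jcb => i iA; apply/eqP; rewrite -leqn0 leqNgt.
  by apply/negP => bi; apply: H; exists i.
Qed.

Lemma PA_inj (A B : {set 'I_n}) : same_ideal (PA (K:=K) A) (PA B) -> A = B.
Proof.
move=> E; apply/setP => i.
have H C : PA C 'X_i <-> i \in C.
  rewrite PA_X; split => [[j jC]|iC]; last by exists i; rewrite // mnm1E eqxx.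
  by rewrite mnm1E; case: eqP => [->|].
apply/idP/idP => [/H /E /H|/H /E /H] //.
Qed.

End AssP.

Definition NCc (n : nat) (F : nat -> {set 'I_n} -> Prop) :=
  exists s, (0 < s)%N /\ exists A0,
    (forall m, (1 <= m <= s)%N -> forall A, F m.+1 A -> F m A \/ A = A0) /\
    (forall m, (s.+1 <= m)%N -> forall A, F m.+1 A -> F m A).

Lemma NC_iff (K : fieldType) (n : nat) (I : {mpoly K[n]} -> Prop) : mon I ->
  nearly_copersistent I <-> NCc (fun m A => AP (ideal_pow I m) A).
Proof.
move=> EI; have EP m := mon_pow m EI.
have toA m A : AP (ideal_pow I m) A -> ass (ideal_pow I m) (PA A).
  by move=> H; apply/(assP _ (EP m)); exists A; split => // g.
have ofA m A : ass (ideal_pow I m) (PA A) -> AP (ideal_pow I m) A.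
  case/(assP _ (EP m)) => B [HB E]; by rewrite (PA_inj E).
split.
- case=> s [s0 [P [[A0 E0] [H1 H2]]]]; exists s; split => //; exists A0; split.
    move=> m ms A /toA /(H1 m ms) [/ofA|E]; [by left|right].
    by apply: PA_inj; apply: same_trans E E0.
  by move=> m ms A /toA /(H2 m ms) /ofA.
- case=> s [s0 [A0 [H1 H2]]]; exists s; split => //; exists (PA A0); split.
    by exists A0 => g.
  split.
    move=> m ms Q /(assP _ (EP _)) [A [HA E]].
    case: (H1 m ms A HA) => [/toA H|e]; last by right; rewrite -e.
    by left; apply: ass_extQ H; apply: same_sym.
  move=> m ms Q /(assP _ (EP _)) [A [HA E]].
  by apply: ass_extQ (toA _ _ (H2 m ms A HA)); apply: same_sym.
Qed.

Lemma NCc_transfer (n1 n2 : nat) (F1 : nat -> {set 'I_n1} -> Prop)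
  (F2 : nat -> {set 'I_n2} -> Prop) (phi : {set 'I_n1} -> {set 'I_n2}) :
  injective phi ->
  (forall m B, F2 m B <-> exists2 A, B = phi A & F1 m A) ->
  NCc F1 <-> NCc F2.
Proof.
move=> inj E; split.
- case=> s [s0 [A0 [H1 H2]]]; exists s; split => //; exists (phi A0); split.
    move=> m ms B /E [A -> /(H1 m ms)] [HA|->]; last by right.
    by left; apply/E; exists A.
  by move=> m ms B /E [A -> /(H2 m ms) HA]; apply/E; exists A.
- case=> s [s0 [B0 [H1 H2]]]; exists s; split => //.
  exists (odflt set0 [pick A | phi A == B0]); split.
    move=> m ms A HA.
    have /(H1 m ms) : F2 m.+1 (phi A) by apply/E; exists A.
    case=> [/E [A' /inj -> HA']|e]; first by left.
    right; case: pickP => [A' /eqP e'|/(_ A)]; last by rewrite e eqxx.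
    by apply: inj; rewrite e e'.
  move=> m ms A HA.
  have /(H2 m ms) /E [A' /inj -> //] : F2 m.+1 (phi A) by apply/E; exists A.
Qed.

Section Blocks.
Variables (n : nat) (i : 'I_n -> nat).
Hypothesis ipos : forall j, (0 < i j)%N.
Local Notation N := (expN i).
Implicit Types (j : 'I_n) (v w : 'I_N) (d : 'X_{1..N}).

Definition lo (j : 'I_n) := (\sum_(l < n | (l < j)%N) i l)%N.
Definition hi (j : 'I_n) := (\sum_(l < n | (l <= j)%N) i l)%N.
Definition blk (j : 'I_n) (v : 'I_N) : bool := (lo j <= v < hi j)%N.

Lemma hi_lo j : hi j = (lo j + i j)%N.
Proof.
rewrite /hi (bigD1 j) //= addnC; congr (_ + _)%N; apply: eq_bigl => l.
by rewrite ltn_neqAle andbC.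
Qed.

Lemma hi_le_lo j j' : (j < j')%N -> (hi j <= lo j')%N.
Proof.
move=> jj; rewrite /lo (bigID (fun l : 'I_n => (l <= j)%N)) /=.
apply: leq_trans (leq_addr _ _); apply: eq_leq; apply: eq_bigl => l.
by case: (leqP l j) => lj; rewrite ?andbT ?andbF // (leq_ltn_trans lj jj).
Qed.

Lemma hi_le_N j : (hi j <= N)%N.
Proof.
rewrite /expN (bigID (fun l : 'I_n => (l <= j)%N)) /=; exact: leq_addr.
Qed.

Lemma blk_uniq j j' v : blk j v -> blk j' v -> j = j'.
Proof.
rewrite /blk => /andP [a b] /andP [c d]; apply: val_inj => /=.
case: (ltngtP j j') => // [/hi_le_lo|/hi_le_lo] h; lia.
Qed.

Lemma lo_lt_N j : (lo j < N)%N.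
Proof. by apply: leq_trans (hi_le_N j); rewrite hi_lo -addn1 leq_add2l. Qed.

Definition fv j : 'I_N := Ordinal (lo_lt_N j).

Lemma blk_fv j : blk j (fv j).
Proof. by rewrite /blk /= leqnn /= hi_lo -addn1 leq_add2l. Qed.

Definition sig (d : 'X_{1..N}) : 'X_{1..n} := [multinom (\sum_(v < N | blk j v) d v)%N | j < n].

Lemma sigE d j : sig d j = (\sum_(v < N | blk j v) d v)%N.
Proof. exact: mnmE. Qed.

Lemma sigD d d' : sig (d + d')%MM = (sig d + sig d')%MM.
Proof.
apply/mnmP => j; rewrite mnmDE !sigE -big_split /=; apply: eq_bigr => v _.
by rewrite mnmDE.
Qed.

Lemma sig_mono d d' : (d <= d')%MM -> (sig d <= sig d')%MM.
Proof.
move/mnm_lepP => H; apply/mnm_lepP => j; rewrite !sigE; apply: leq_sum => v _; exact: H.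
Qed.

Lemma sig0 : sig 0%MM = 0%MM.
Proof. by apply/mnmP => j; rewrite sigE mnm0E big1 // => v _; rewrite mnm0E. Qed.

Lemma sigU v j : sig U_(v)%MM j = blk j v.
Proof.
rewrite sigE big_mkcond (bigD1 v) //= mnm1E eqxx big1 ?addn0.
  by case: (blk j v).
by move=> w /negPf wv; rewrite mnm1E eq_sym wv; case: (blk j w).
Qed.

Lemma sigU_blk v j : blk j v -> sig U_(v)%MM = U_(j)%MM.
Proof.
move=> bv; apply/mnmP => j'; rewrite sigU mnm1E.
case: eqP => [<-|ne]; first by rewrite bv.
by case: (boolP (blk j' v)) => // /(blk_uniq bv) e; case: ne.
Qed.

Lemma sigU_none v : (forall j, ~~ blk j v) -> sig U_(v)%MM = 0%MM.
Proof. by move=> H; apply/mnmP => j; rewrite sigU mnm0E (negPf (H j)). Qed.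

Lemma sigB a d : (a <= d)%MM -> sig (d - a)%MM = (sig d - sig a)%MM.
Proof.
move=> le; apply/mnmP => j; rewrite mnmBE -{2}(submK le) sigD mnmDE; lia.
Qed.

Lemma sig_pos d j : (0 < sig d j)%N -> exists2 v, blk j v & (0 < d v)%N.
Proof.
rewrite sigE => H; case: (boolP [exists v, blk j v && (0 < d v)%N]).
  by case/existsP => v /andP [] ; exists v.
move=> H'; exfalso; move: H; rewrite big1 // => v bv.
apply/eqP; rewrite -leqn0 leqNgt; apply: contra H' => dv; apply/existsP; exists v.
by rewrite bv.
Qed.

Lemma sig_ge d j v : blk j v -> (d v <= sig d j)%N.
Proof. by move=> bv; rewrite sigE (bigD1 v) //= leq_addr. Qed.

Lemma mdeg_ind (P : 'X_{1..n} -> Prop) :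
  P 0%MM -> (forall a j, P a -> P (a + U_(j))%MM) -> forall a, P a.
Proof.
move=> P0 PS.
suff H : forall k a, (mdeg a < k)%N -> P a by move=> a; apply: H (ltnSn _).
elim=> [|k IH] a // sza.
have [-> //|anz] := eqVneq a 0%MM.
have [j aj] : exists j, (0 < a j)%N.
  case: (boolP [exists j, 0 < a j]%N) => [/existsP [j H]|H]; first by exists j.
  case/negP: anz; apply/eqP/mnmP => j; rewrite mnm0E.
  by apply/eqP; rewrite -leqn0 leqNgt; apply: contra H => lt; apply/existsP; exists j.
have le : (U_(j) <= a)%MM by apply/mnm_lepP => l; rewrite mnm1E; case: eqP => [<-|].
rewrite -(submK le); apply: PS; apply: IH.
have := mdegD (a - U_(j)) U_(j); rewrite submK // mdeg1; lia.
Qed.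

Lemma sig_split : forall a' d, (a' <= sig d)%MM -> exists2 a, (a <= d)%MM & sig a = a'.
Proof.
elim/mdeg_ind => [|a' j IH] d le.
  by exists 0%MM; [apply/mnm_lepP => v; rewrite mnm0E | exact: sig0].
have le' : (a' <= sig d)%MM.
  by apply: lepm_trans le; apply/mnm_lepP => l; rewrite mnmDE leq_addr.
have [a0 a0d sa0] := IH d le'.
have : (0 < sig (d - a0)%MM j)%N.
  rewrite sigB // mnmBE sa0; move/mnm_lepP: le => /(_ j); rewrite mnmDE mnm1E eqxx; lia.
case/sig_pos => v bv dv.
exists (a0 + U_(v))%MM; last by rewrite sigD sa0 (sigU_blk bv).
apply/mnm_lepP => w; rewrite mnmDE mnm1E; move/mnm_lepP: a0d => /(_ w).
move: dv; rewrite mnmBE; case: eqP => [<-|_]; lia.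
Qed.

Lemma sig_lift : forall a, exists c, sig c = a /\
  forall v, (forall j, blk j v -> a j = 0%N) -> c v = 0%N.
Proof.
elim/mdeg_ind => [|a j [c [sc Hc]]].
  by exists 0%MM; split; [exact: sig0| move=> v _; rewrite mnm0E].
exists (c + U_(fv j))%MM; split; first by rewrite sigD sc (sigU_blk (blk_fv j)).
move=> v Hv; rewrite mnmDE mnm1E Hc; last first.
  by move=> j' /Hv; rewrite mnmDE; lia.
case: eqP => // e; move: (Hv j); rewrite -e blk_fv mnmDE mnm1E eqxx; move=> /(_ isT); lia.
Qed.

Definition resb j (d : 'X_{1..N}) := [multinom if blk j v then d v else 0%N | v < N].
Definition resc j (d : 'X_{1..N}) := [multinom if blk j v then 0%N else d v | v < N].

Lemma res_add j d : (resb j d + resc j d)%MM = d.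
Proof. by apply/mnmP => v; rewrite mnmDE !mnmE; case: (blk j v); lia. Qed.

Lemma sig_resb j d : sig (resb j d) j = sig d j.
Proof. by rewrite !sigE; apply: eq_bigr => v bv; rewrite mnmE bv. Qed.

Lemma sig_resc j j' d : j' != j -> sig (resc j d) j' = sig d j'.
Proof.
move=> ne; rewrite !sigE; apply: eq_bigr => v bv; rewrite mnmE.
case: (boolP (blk j v)) => // bj; by rewrite (blk_uniq bv bj) eqxx in ne.
Qed.

Definition star (A : {set 'I_n}) : {set 'I_N} := [set v | [exists j in A, blk j v]].

Lemma star_inj : injective star.
Proof.
move=> A B E; apply/setP => j.
have H C : (fv j \in star C) = (j \in C).
  rewrite inE; apply/existsP/idP => [[j' /andP [jC b]]|jC]; last by exists j; rewrite jC blk_fv.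
  by rewrite (blk_uniq (blk_fv j) b).
by rewrite -H E H.
Qed.

End Blocks.

Section Generic.
Local Open Scope ring_scope.
Variables (K : fieldType) (n : nat).
Local Notation R := {mpoly K[n]}.
Local Notation M := 'X_{1..n}.

Lemma gen_union (T : Type) (G : T -> Prop) (Jf : T -> R -> Prop) :
  (forall u, G u -> mon (Jf u)) ->
  same_ideal (gen (fun f => exists2 u, G u & Jf u f))
             (mideal (fun d => exists2 u, G u & Jf u 'X_[d])).
Proof.
move=> H g; split; apply: gen_mono.
  move=> y [u Gu /(H u Gu)]; apply: gen_mono => z [m Jm ->].
  by apply: gen_sub; exists m => //; exists u.
by move=> y [m [u Gu Jm] ->]; apply: gen_sub; exists u.
Qed.


Lemma mon_union (T : Type) (G : T -> Prop) (Jf : T -> R -> Prop) :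
  (forall u, G u -> mon (Jf u)) ->
  mon (gen (fun f => exists2 u, G u & Jf u f)) /\
  forall d, gen (fun f => exists2 u, G u & Jf u f) 'X_[d] <->
            exists2 u, G u & Jf u 'X_[d].
Proof.
move=> H; have E := gen_union H.
have HX d : gen (fun f => exists2 u, G u & Jf u f) 'X_[d] <-> exists2 u, G u & Jf u 'X_[d].
  rewrite (E _) midealX; split; last by move=> [u Gu Ju]; exists d; [exists u | exact: lepm_refl].
  by case=> s [u Gu Ju] le; exists u => //; apply: mon_up (H u Gu) Ju le.
split => //; apply: monP; exists (fun d => exists2 u, G u & Jf u 'X_[d]); exact: E.
Qed.

Lemma mingen_ex (I : R -> Prop) (c : M) : mon I -> I 'X_[c] ->
  exists2 u, mingen I u & (u <= c)%MM.
Proof.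
move=> EI.
suff H : forall k (c : M), (mdeg c < k)%N -> I 'X_[c] -> exists2 u, mingen I u & (u <= c)%MM.
  by apply: H (ltnSn _).
elim=> [|k IH] {}c // szc Ic.
case: (classic (exists m', [/\ I 'X_[m'], (m' <= c)%MM & m' <> c])).
  case=> m' [Im' le ne]; have : (mdeg m' < k)%N.
    have := mdegD (c - m') m'; rewrite submK //.
    have : mdeg (c - m') != 0%N.
      by rewrite mdeg_eq0; apply/eqP => e; apply: ne; rewrite -(submK le) e add0m.
    lia.
  case/IH => // u mu le'; exists u => //; exact: lepm_trans le' le.
move=> Hn; exists c; last exact: lepm_refl.
split => // m' Im' le; apply: NNPP => ne; apply: Hn; exists m'; split => //.
exact/mnm_lepP.
Qed.

Lemma mingen_in (I : R -> Prop) u : mingen I u -> I 'X_[u].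
Proof. by case. Qed.

End Generic.

Section Exp.
Local Open Scope ring_scope.
Variables (K : fieldType) (n : nat) (i : 'I_n -> nat).
Hypothesis ipos : forall j, (0 < i j)%N.
Local Notation N := (expN i).
Local Notation RN := {mpoly K[N]}.
Implicit Types (j : 'I_n) (v : 'I_N) (d : 'X_{1..N}).
Local Notation sg := (@sig n i).

Lemma exp_primeE j : same_ideal (exp_prime (K:=K) i j) (PA [set v | blk j v]).
Proof. by apply: gen_ext => f; split => -[v bv ->]; exists v; rewrite ?inE in bv *. Qed.

Lemma mon_exp_prime j : mon (exp_prime (K:=K) i j).
Proof. by apply: monP; eexists; apply: same_trans (exp_primeE j) (PA_mideal _). Qed.

Lemma exp_primeX j d : exp_prime (K:=K) i j 'X_[d] <-> (0 < sg d j)%N.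
Proof.
rewrite (exp_primeE j _) PA_X; split.
  by case=> v; rewrite inE => bv dv; apply: leq_trans dv (sig_ge _ bv).
by case/sig_pos => v bv dv; exists v; rewrite ?inE.
Qed.

Lemma exp_powX j k d : ideal_pow (exp_prime (K:=K) i j) k 'X_[d] <-> (k <= sg d j)%N.
Proof.
elim: k d => [|k IH] d; first by split.
rewrite (mon_powX _ _ (mon_exp_prime j)); split.
  case=> a [b [/IH Ha /exp_primeX Hb le]].
  have := sig_mono le; move/mnm_lepP => /(_ j); rewrite sigD mnmDE; lia.
move=> H; have [v bv dv] := sig_pos (leq_ltn_trans (leq0n k) H).
have le : (U_(v) <= d)%MM by apply/mnm_lepP => w; rewrite mnm1E; case: eqP => [<-|].
exists (d - U_(v))%MM, U_(v)%MM; split.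
- by apply/IH; rewrite sigB // mnmBE (sigU_blk bv) mnm1E eqxx; lia.
- by apply/exp_primeX; rewrite (sigU_blk bv) mnm1E eqxx.
- by rewrite submK // lepm_refl.
Qed.

Lemma exp_fold (u : 'X_{1..n}) (l : seq 'I_n) : uniq l ->
  mon (foldr (@ideal_mul _) (fun _ : RN => True)
         [seq ideal_pow (exp_prime (K:=K) i j) (u j) | j <- l]) /\
  forall d, foldr (@ideal_mul _) (fun _ : RN => True)
         [seq ideal_pow (exp_prime (K:=K) i j) (u j) | j <- l] 'X_[d] <->
     (forall j, j \in l -> (u j <= sg d j)%N).
Proof.
elim: l => [|j l IH] /=; first by split; [exact: mon_true | ].
case/andP => jl /IH [E HX].
have [E' HX'] := mon_mul (mon_pow (u j) (mon_exp_prime j)) E.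
split => // d; rewrite HX'; split.
  case=> a [b [/exp_powX Ha /HX Hb le]] j'; rewrite inE.
  have /mnm_lepP Hs := sig_mono le.
  case/orP => [/eqP ->|/Hb]; move: (Hs j) (Hs j'); rewrite sigD !mnmDE; lia.
move=> H; exists (resb j d), (resc j d); split.
- by apply/exp_powX; rewrite sig_resb; apply: H; rewrite inE eqxx.
- apply/HX => j' j'l; rewrite sig_resc; first by apply: H; rewrite inE j'l orbT.
  by apply: contraNneq jl => <-.
- by rewrite res_add lepm_refl.
Qed.

Lemma exp_mon (u : 'X_{1..n}) : mon (exp_monideal (K:=K) i u) /\
  forall d, exp_monideal (K:=K) i u 'X_[d] <-> (u <= sg d)%MM.
Proof.
have [E HX] := exp_fold u (enum_uniq 'I_n); split => // d.
rewrite /exp_monideal HX; split => [H|/mnm_lepP H j _ //].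
by apply/mnm_lepP => j; apply: H; rewrite mem_enum.
Qed.

Variable I : {mpoly K[n]} -> Prop.
Hypothesis EI : mon I.

Lemma expansion_mon : mon (expansion i I) /\
  forall d, expansion i I 'X_[d] <-> I 'X_[sg d].
Proof.
have [E HX] := mon_union (fun u (_ : mingen I u) => (exp_mon u).1).
split => // d; rewrite /expansion HX; split.
  by case=> u /mingen_in Iu /(exp_mon u).2 le; apply: mon_up EI Iu le.
by case/(mingen_ex EI) => u mu le; exists u => //; apply/(exp_mon u).2.
Qed.

Lemma exp_powE m d : ideal_pow (expansion i I) m 'X_[d] <-> ideal_pow I m 'X_[sg d].
Proof.
have [E HX] := expansion_mon.
elim: m d => [|m IH] d //.
rewrite (mon_powX _ _ E) (mon_powX _ _ EI); split.
  case=> a [b [/IH Ha /HX Hb le]]; exists (sg a), (sg b); split => //.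
  by rewrite -sigD; apply: sig_mono.
case=> a' [b' [Ha Hb le]].
have le' : (a' <= sg d)%MM by apply: lepm_trans le; apply: lepm_addr.
have [a ad sa] := sig_split le'.
exists a, (d - a)%MM; split.
- by apply/IH; rewrite sa.
- apply/HX; apply: mon_up EI Hb _; rewrite sigB // sa.
  apply/mnm_lepP => j; move/mnm_lepP: le => /(_ j); rewrite mnmBE mnmDE; lia.
- by rewrite addmC submK // lepm_refl.
Qed.

End Exp.

Section ExpAP.
Variables (K : fieldType) (n : nat) (i : 'I_n -> nat).
Hypothesis ipos : forall j, (0 < i j)%N.
Local Notation N := (expN i).
Local Notation sg := (@sig n i).

Lemma exp_AP (J1 : {mpoly K[n]} -> Prop) (J2 : {mpoly K[N]} -> Prop) :
  (forall d, J2 'X_[d] <-> J1 'X_[sg d]) ->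
  forall B, AP J2 B <-> exists2 A, B = star i A & AP J1 A.
Proof.
move=> HJ B; split.
- case=> c [Jc HB Hd].
  pose A := [set j | [exists v in B, blk j v]].
  have inB v : v \in B -> exists2 j, blk j v & J1 'X_[sg c + U_(j)].
    move=> vB; have := HB v vB; rewrite HJ sigD.
    case: (boolP [exists j, blk j v]) => [/existsP [j bj]|H].
      by rewrite (sigU_blk bj) => J; exists j.
    rewrite sigU_none ?addm0; first by move/HJ.
    by move=> j; apply: contra H => bj; apply/existsP; exists j.
  have BA : B = star i A.
    apply/setP => v; rewrite inE; apply/idP/idP.
      move=> vB; have [j bj _] := inB v vB; apply/existsP; exists j.
      by rewrite bj andbT inE; apply/existsP; exists v; rewrite vB.
    case/existsP => j /andP []; rewrite inE => /existsP [v' /andP [v'B bv']] bv.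
    apply: NNPP => /negP vB.
    have [j' bj' J'] := inB v' v'B; rewrite -(blk_uniq bv' bj') in J'.
    apply: (Hd U_(v)%MM).
      by move=> w wB; rewrite mnm1E; case: eqP => // e; rewrite e wB in vB.
    by apply/HJ; rewrite sigD (sigU_blk bv).
  exists A => //; exists (sg c); split.
  + by move/HJ.
  + move=> j; rewrite inE => /existsP [v /andP [vB bv]].
    have [j' bj' J'] := inB v vB; by rewrite (blk_uniq bv bj').
  + move=> d Hdd J1d; have [e [se He]] := sig_lift ipos d.
    apply: (Hd e); last by apply/HJ; rewrite sigD se.
    move=> v; rewrite BA inE => /existsP [j /andP [jA bj]].
    apply: He => j' bj'; rewrite -(blk_uniq bj bj'); exact: Hdd.
- case=> A -> [a [Ja HA Hd]]; have [c [sc _]] := sig_lift ipos a.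
  exists c; split.
  + by move/HJ; rewrite sc.
  + move=> v; rewrite inE => /existsP [j /andP [jA bj]].
    by apply/HJ; rewrite sigD sc (sigU_blk bj); apply: HA.
  + move=> d Hdd /HJ; rewrite sigD sc; apply: Hd => j jA; rewrite sigE big1 // => v bv.
    by apply: Hdd; rewrite inE; apply/existsP; exists j; rewrite jA.
Qed.

End ExpAP.

Section Wt.
Local Open Scope ring_scope.
Variables (K : fieldType) (n : nat) (w : 'I_n -> nat).
Hypothesis wpos : forall j, (0 < w j)%N.
Local Notation M := 'X_{1..n}.
Implicit Types (d c a b u q : M).

Definition dw d : M := [multinom (d j %/ w j)%N | j < n].

Lemma divh j (q r : nat) : ((w j * q + r) %/ w j = q + r %/ w j)%N.
Proof. by rewrite mulnC divnMDl. Qed.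

Lemma wmon_le u d : (wmon w u <= d)%MM = (u <= dw d)%MM.
Proof.
apply/mnm_lepP/mnm_lepP => H j; move: (H j); rewrite !mnmE.
  by rewrite leq_divRL // mulnC.
by rewrite leq_divRL // mulnC.
Qed.

Lemma dw_wmon u : dw (wmon w u) = u.
Proof. by apply/mnmP => j; rewrite !mnmE mulKn. Qed.

Variable I : {mpoly K[n]} -> Prop.
Hypothesis EI : mon I.

Lemma weighted_mon : mon (weighted w I) /\ forall d, weighted w I 'X_[d] <-> I 'X_[dw d].
Proof.
have E : same_ideal (weighted w I) (mideal (fun m => exists2 u, mingen I u & m = wmon w u)).
  by apply: gen_ext => f; split => [[u mu ->]|[m [u mu ->] ->]]; [exists (wmon w u) => //; exists u|exists u].
split; first by apply: monP; eexists; exact: E.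
move=> d; rewrite (E _) midealX; split.
  by case=> s [u /mingen_in Iu ->]; rewrite wmon_le => le; apply: mon_up EI Iu le.
case/(mingen_ex EI) => u mu le; exists (wmon w u); first by exists u.
by rewrite wmon_le.
Qed.

Lemma wt_powE m d : ideal_pow (weighted w I) m 'X_[d] <-> ideal_pow I m 'X_[dw d].
Proof.
have [E HX] := weighted_mon.
elim: m d => [|m IH] d; first by split.
rewrite (mon_powX _ _ E) (mon_powX _ _ EI); split.
  case=> a [b [/IH Ha /HX Hb le]]; exists (dw a), (dw b); split => //.
  apply/mnm_lepP => j; move/mnm_lepP: le => /(_ j); rewrite !mnmDE !mnmE => le.
  rewrite leq_divRL // mulnDl; apply: leq_trans le; apply: leq_add; exact: leq_trunc_div.
case=> a' [b' [Ha Hb le]]; exists (wmon w a'), (wmon w b'); split.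
- by apply/IH; rewrite dw_wmon.
- by apply/HX; rewrite dw_wmon.
- apply/mnm_lepP => j; move/mnm_lepP: le => /(_ j); rewrite !mnmDE !mnmE.
  by rewrite leq_divRL // -mulnDr mulnC.
Qed.

End Wt.

Section WtAP.
Variables (K : fieldType) (n : nat) (w : 'I_n -> nat).
Hypothesis wpos : forall j, (0 < w j)%N.

Lemma wt_AP (J1 J2 : {mpoly K[n]} -> Prop) : mon J1 ->
  (forall d, J2 'X_[d] <-> J1 'X_[dw w d]) ->
  forall A, AP J2 A <-> AP J1 A.
Proof.
move=> E1 HJ A; split.
- case=> c [Jc HA Hd]; exists (dw w c); split.
  + by move/HJ.
  + move=> i iA; have := HA i iA; rewrite HJ => H; apply: mon_up E1 H _.
    apply/mnm_lepP => j; rewrite !mnmDE ?mnm1E !mnmE.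
    have wj := wpos j; have h := ltn_ceil (c j) wj.
    rewrite -ltnS ltn_divLR //; set q := (c j %/ w j)%N in h *; case: (i == j) h => /= h; nia.
  + move=> d Hdd J1d; apply: (Hd (wmon w d)).
      by move=> i iA; rewrite mnmE Hdd // muln0.
    apply/HJ; have -> : dw w (c + wmon w d) = (dw w c + d)%MM by
      apply/mnmP => j; rewrite !mnmDE !mnmE addnC (divh wpos) addnC.
    exact: J1d.
- case=> q [Jq HA Hd].
  pose c : 'X_{1..n} := [multinom (w j * q j + (if j \in A then (w j).-1 else 0))%N | j < n].
  have small j : ((if j \in A then (w j).-1 else 0) %/ w j = 0)%N.
    by apply: divn_small; case: (j \in A); have := wpos j; lia.
  have dwc : dw w c = q.
    apply/mnmP => j; rewrite !mnmE (divh wpos) small addn0 //.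
  exists c; split.
  + by move/HJ; rewrite dwc.
  + move=> i iA; apply/HJ.
    have -> : dw w (c + U_(i)) = (q + U_(i))%MM; last exact: HA.
    apply/mnmP => j; rewrite !mnmDE ?mnm1E !mnmE -addnA (divh wpos).
    case: eqP => [<-|ne]; last by rewrite addn0 small.
    rewrite iA addn1 prednK // divnn wpos //.
  + move=> d Hdd J2d.
    pose d'' : 'X_{1..n} := [multinom if j \in A then 0%N else (d j %/ w j)%N | j < n].
    apply: (Hd d''); first by move=> i iA; rewrite mnmE iA.
    move/HJ: J2d; have -> // : dw w (c + d) = (q + d'')%MM.
    apply/mnmP => j; rewrite !mnmDE !mnmE -addnA (divh wpos).
    case: (boolP (j \in A)) => jA; last by rewrite ?addn0.
    by rewrite Hdd // addn0 divn_small //; have := wpos j; lia.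
Qed.

End WtAP.

Theorem lemma4p11 (K : fieldType) (n : nat) (I : {mpoly K[n]} -> Prop) :
  is_monomial_ideal I ->
  (forall i : 'I_n -> nat, (forall j, 0 < i j)%N ->
     (nearly_copersistent I <-> nearly_copersistent (expansion i I))) /\
  (forall w : 'I_n -> nat, (forall j, 0 < w j)%N ->
     (nearly_copersistent I <-> nearly_copersistent (weighted w I))).
Proof.
move=> HI; have EI := monP HI; split.
- move=> i ipos; have [E _] := expansion_mon i EI.
  apply: iff_trans (NC_iff EI) _; apply: iff_trans _ (iff_sym (NC_iff E)).
  apply: (NCc_transfer (phi := star i)); first exact: star_inj ipos.
  move=> m B; apply: (exp_AP ipos) => d; exact: exp_powE EI m d.
- move=> w wpos; have [E _] := weighted_mon wpos EI.
  apply: iff_trans (NC_iff EI) _; apply: iff_trans _ (iff_sym (NC_iff E)).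
  apply: (NCc_transfer (phi := id)) => // m A.
  have H := wt_AP wpos (mon_pow m EI) (fun d => wt_powE wpos EI m d) A.
  split; first by move=> HA; exists A => //; apply/H.
  by case=> A' e HA; apply/H; rewrite e.
Qed.
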